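(* Let $\tilde L$ be a minimum-size counterexample. Then the greatest element $1_{\tilde L}$ is join-reducible in $\tilde L$, i.e. it upper covers at least two elements.
   Context: For a poset $P$, $x$ upper covers $y$ if $y<x$ with nothing strictly between. Join-irreducible: upper covers exactly one element; join-reducible: upper covers more than one element. For $x\in P$, ${\uparrow}x=\{y: x\le y\}$. A counterexample is a finite lattice $L$ with $|L|>1$ in which every join-irreducible $j$ satisfies $|{\uparrow}j|>|L|/2$; a minimum-size counterexample is a counterexample $\tilde L$ such that no counterexample has fewer elements. *)

(* Defs.v *)
From mathcomp Require Import all_boot all_order.
Set Implicit Arguments. Unset Strict Implicit. Unset Printing Implicit Defensive.
Import Order.TTheory.
Local Open Scope order_scope.

Definition ucovers {d} {T : finPOrderType d} (x y : T) : bool :=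
  (y < x) && [forall z : T, ~~ ((y < z) && (z < x))].

Definition lower_covers {d} {T : finPOrderType d} (x : T) : {set T} :=
  [set y | ucovers x y].

Definition join_irreducible {d} {T : finPOrderType d} (x : T) : bool :=
  #|lower_covers x| == 1%N.

Definition join_reducible {d} {T : finPOrderType d} (x : T) : bool :=
  (1 < #|lower_covers x|)%N.

Definition upset {d} {T : finPOrderType d} (x : T) : {set T} := [set y | x <= y].

(* counterexample: finite lattice, |L| > 1, every join-irreducible j has
   |up j| > |L|/2, i.e. 2 |up j| > |L| *)
Definition counterexample {d} (L : finLatticeType d) : Prop :=
  (1 < #|L|)%N /\
  forall j : L, join_irreducible j -> (#|L| < 2 * #|upset j|)%N.

Definition min_counterexample {d} (L : finLatticeType d) : Prop :=
  counterexample L /\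
  forall (d' : Order.disp_t) (L' : finLatticeType d'),
    counterexample L' -> (#|L| <= #|L'|)%N.

(* Main.v *)
Require Import Defs.
From mathcomp Require Import all_boot all_order.
Import Order.TTheory.
Local Open Scope order_scope.

Theorem corollary2p4 (d : Order.disp_t) (L : finLatticeType d) :
  min_counterexample L ->
  forall t : L, (forall x : L, x <= t) -> join_reducible t.
Proof.
move=> [[H1 Hj] _] t Ht.
have [x0 ltx0] : exists x0 : L, x0 < t.
  have /card_gt1P [x [y [_ _ nxy]]] : (1 < #|[set: L]|)%N by rewrite cardsT.
  case: (eqVneq x t) => [exs|nx].
    by exists y; rewrite lt_neqAle Ht andbT; rewrite exs eq_sym in nxy.
  by exists x; rewrite lt_neqAle Ht nx.
have cov : exists y : L, y \in lower_covers t.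
  case: (@arg_minnP _ x0 (fun y => y < t) (fun y => #|upset y|) ltx0) => y lyt ymin.
  exists y; rewrite inE /ucovers lyt /=; apply/forallP => z.
  apply/negP => /andP [lyz lzt].
  have := ymin z lzt.
  have sub : upset z \proper upset y.
    rewrite properE; apply/andP; split.
      apply/subsetP => w; rewrite !inE => /(le_trans (ltW lyz)) //.
    apply/subsetPn; exists y; first by rewrite inE.
    by rewrite inE; apply/negP => lzy; have := lt_le_trans lyz lzy; rewrite ltxx.
  by rewrite leqNgt (proper_card sub).
rewrite /join_reducible ltnNge; apply/negP => le1.
have c1 : #|lower_covers t| = 1%N.
  case: cov => y yin; apply/eqP; rewrite eqn_leq le1 /=.
  by apply/card_gt0P; exists y.
have := Hj t (introT eqP c1).
have -> : upset t = [set t].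
  apply/setP => w; rewrite !inE; apply/idP/eqP => [tw|->//].
  by apply/le_anti; rewrite tw Ht.
by rewrite cards1 muln1 ltnNge H1.
Qed.
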